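(* Let $f:\mathbb{R}^n\to\mathbb{R}$, $g:\mathbb{R}^m\to\mathbb{R}$, $Q:\mathbb{R}^n\times\mathbb{R}^m\to\mathbb{R}\cup\{+\infty\}$ and $L(x,y)=f(x)+Q(x,y)+g(y)$ satisfy: (A1) $L$ is bounded below; $f,g$ are continuously differentiable with $\nabla f$, $\nabla g$ Lipschitz continuous with constants $L_{\nabla f}$, $L_{\nabla g}$; $Q$ is proper and lower semicontinuous; $\phi_1:\mathbb{R}^n\to\mathbb{R}$, $\phi_2:\mathbb{R}^m\to\mathbb{R}$ are differentiable, $\phi_i$ is $\theta_i$-strongly convex with $\theta_1>L_{\nabla f}$, $\theta_2>L_{\nabla g}$, and $\nabla\phi_i$ is $\eta_i$-Lipschitz continuous ($i=1,2$); (A2) $L$ is coercive and $\mathrm{dom}\,Q$ is closed; for all $(x,y)\in\mathrm{dom}\,Q$, $\partial_xQ(x,y)\times\partial_yQ(x,y)\subset\partial Q(x,y)$; and $Q(x,y)=q(x,y)+h(x)$, where $h:\mathbb{R}^n\to\mathbb{R}\cup\{+\infty\}$ is continuous on its domain, $q:\mathbb{R}^n\times\mathbb{R}^m\to\mathbb{R}\cup\{+\infty\}$ is continuous on $\mathrm{dom}\,Q$, for every $y$ the partial function $q(\cdot,y)$ is continuously differentiable, and for each bounded subset $D_1\times D_2\subset\mathrm{dom}\,Q$ there exists $\xi>0$ such that $\|\nabla_xq(\bar x,y)-\nabla_xq(\bar x,\bar y)\|\le\xi\|y-\bar y\|$ for all $\bar x\in D_1$, $y,\bar y\in D_2$. Let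 $\{(x_k,y_k)\}$ and $\{(\hat x_k,\hat y_k)\}$ be sequences generated by the following algorithm: choose $(x_0,y_0)\in\mathbb{R}^n\times\mathbb{R}^m$, set $(\hat x_0,\hat y_0)=(x_0,y_0)$, choose $\alpha_{\max},\beta_{\max}\ge0$ with $\alpha_{\max}+\beta_{\max}<1$ and $\alpha_k\in[0,\alpha_{\max}]$, $\beta_k\in[0,\beta_{\max}]$; for $k=0,1,\dots$: 1. $x_{k+1}\in\arg\min_{x}\{Q(x,\hat y_k)+\langle\nabla f(\hat x_k),x\rangle+D_{\phi_1}(x,\hat x_k)\}$, $y_{k+1}\in\arg\min_{y}\{Q(x_{k+1},y)+\langle\nabla g(\hat y_k),y\rangle+D_{\phi_2}(y,\hat y_k)\}$; 2. $u_{k+1}=x_{k+1}+\alpha_k(x_{k+1}-x_k)+\beta_k(x_k-x_{k-1})$, $v_{k+1}=y_{k+1}+\alpha_k(y_{k+1}-y_k)+\beta_k(y_k-y_{k-1})$; 3. if $L(u_{k+1},v_{k+1})\le L(x_{k+1},y_{k+1})$ then $(\hat x_{k+1},\hat y_{k+1})=(u_{k+1},v_{k+1})$, else $(\hat x_{k+1},\hat y_{k+1})=(x_{k+1},y_{k+1})$. For any integer $k\ge1$ set $q_x^{k+1}=\nabla f(x_{k+1})-\nabla f(\hat x_k)-\nabla\phi_1(x_{k+1})+\nabla\phi_1(\hat x_k)$, $p_x^{k+1}=\nabla_xq(x_{k+1},y_{k+1})-\nabla_xq(x_{k+1},\hat y_k)+q_x^{k+1}$, $p_y^{k+1}=\nabla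 g(y_{k+1})-\nabla g(\hat y_k)-\nabla\phi_2(y_{k+1})+\nabla\phi_2(\hat y_k)$. Then $(p_x^{k+1},p_y^{k+1})\in\partial L(x_{k+1},y_{k+1})$, and there exists $\varrho>0$ such that $\|(p_x^{k+1},p_y^{k+1})\|\le\varrho\|(x_{k+1}-\hat x_k,y_{k+1}-\hat y_k)\|$.
   Context: For a convex differentiable $\phi$, $D_\phi(x,y)=\phi(x)-\phi(y)-\langle\nabla\phi(y),x-y\rangle$ (Bregman distance). $\phi$ is $\theta$-strongly convex if $\phi-\frac\theta2\|\cdot\|^2$ is convex. For a proper lsc $F$, the Fréchet subdifferential $\hat\partial F(x)$ is the set of $v$ with $\liminf_{y\to x}\frac{F(y)-F(x)-\langle v,y-x\rangle}{\|y-x\|}\ge0$ (empty if $x\notin\mathrm{dom}F$), and the (limiting) subdifferential is $\partial F(x)=\{v:\exists x_k\to x, F(x_k)\to F(x), v_k\in\hat\partial F(x_k), v_k\to v\}$. $\partial_xQ(x,y)$ and $\partial_yQ(x,y)$ denote the limiting subdifferentials of $Q(\cdot,y)$ at $x$ and of $Q(x,\cdot)$ at $y$. $(x_{-1},y_{-1})$ in step 2 is a given initial point (e.g. $(x_0,y_0)$). *)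

(* Defs.v *)
From HB Require Import structures.
From mathcomp Require Import all_boot all_order all_algebra.
From mathcomp Require Import reals constructive_ereal.
Set Implicit Arguments. Unset Strict Implicit. Unset Printing Implicit Defensive.
Import Order.TTheory GRing.Theory Num.Theory.
Local Open Scope ring_scope.

Definition dotv {R : realType} {n : nat} (u v : 'rV[R]_n) : R :=
  \sum_(i < n) u 0 i * v 0 i.
Definition normv {R : realType} {n : nat} (u : 'rV[R]_n) : R :=
  Num.sqrt (dotv u u).

Definition subp {R : realType} {n m : nat} (z w : 'rV[R]_n * 'rV[R]_m)
  : 'rV[R]_n * 'rV[R]_m := (z.1 - w.1, z.2 - w.2).
Definition dotp {R : realType} {n m : nat} (z w : 'rV[R]_n * 'rV[R]_m) : R :=
  dotv z.1 w.1 + dotv z.2 w.2.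
Definition normp {R : realType} {n m : nat} (z : 'rV[R]_n * 'rV[R]_m) : R :=
  Num.sqrt (dotp z z).

Definition frechet_subdiff {R : realType} {V : Type} (sub : V -> V -> V)
  (nrm : V -> R) (dt : V -> V -> R) (F : V -> \bar R) (x v : V) : Prop :=
  F x \is a fin_num /\
  forall eps : R, 0 < eps -> exists delta : R, 0 < delta /\
    forall y : V, nrm (sub y x) < delta ->
      (F x + (dt v (sub y x) - eps * nrm (sub y x))%:E <= F y)%E.

Definition seq_cvg {R : realType} {V : Type} (sub : V -> V -> V)
  (nrm : V -> R) (xs : nat -> V) (x : V) : Prop :=
  forall eps : R, 0 < eps -> exists N : nat, forall k : nat, (N <= k)%N ->
    nrm (sub (xs k) x) < eps.

Definition limiting_subdiff {R : realType} {V : Type} (sub : V -> V -> V)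
  (nrm : V -> R) (dt : V -> V -> R) (F : V -> \bar R) (x v : V) : Prop :=
  exists (xs vs : nat -> V),
    (forall k, frechet_subdiff sub nrm dt F (xs k) (vs k)) /\
    seq_cvg sub nrm xs x /\ seq_cvg sub nrm vs v /\
    F x \is a fin_num /\
    (forall eps : R, 0 < eps -> exists N : nat, forall k : nat, (N <= k)%N ->
        `|fine (F (xs k)) - fine (F x)| < eps).

Definition subdiffv {R : realType} {n : nat} (F : 'rV[R]_n -> \bar R) :=
  limiting_subdiff (fun a b : 'rV[R]_n => a - b) normv dotv F.
Definition subdiffp {R : realType} {n m : nat}
  (F : 'rV[R]_n * 'rV[R]_m -> \bar R) :=
  limiting_subdiff subp normp dotp F.

Definition is_gradient {R : realType} {n : nat} (F : 'rV[R]_n -> R)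
  (G : 'rV[R]_n -> 'rV[R]_n) : Prop :=
  forall (x : 'rV[R]_n) (eps : R), 0 < eps -> exists delta : R, 0 < delta /\
    forall h : 'rV[R]_n, normv h < delta ->
      `|F (x + h) - F x - dotv (G x) h| <= eps * normv h.

Definition continuous_v {R : realType} {n : nat} (G : 'rV[R]_n -> 'rV[R]_n) : Prop :=
  forall (x : 'rV[R]_n) (eps : R), 0 < eps -> exists delta : R, 0 < delta /\
    forall y, normv (y - x) < delta -> normv (G y - G x) < eps.

Definition lipschitz_v {R : realType} {n : nat} (G : 'rV[R]_n -> 'rV[R]_n) (c : R) : Prop :=
  forall x y, normv (G x - G y) <= c * normv (x - y).

Definition convex_fun {R : realType} {n : nat} (F : 'rV[R]_n -> R) : Prop :=
  forall (x y : 'rV[R]_n) (t : R), 0 <= t -> t <= 1 ->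
    F (t *: x + (1 - t) *: y) <= t * F x + (1 - t) * F y.

Definition strongly_convex {R : realType} {n : nat} (phi : 'rV[R]_n -> R) (theta : R) : Prop :=
  convex_fun (fun z => phi z - theta / 2 * normv z ^+ 2).

Definition bregman {R : realType} {n : nat} (phi : 'rV[R]_n -> R)
  (gphi : 'rV[R]_n -> 'rV[R]_n) (x y : 'rV[R]_n) : R :=
  phi x - phi y - dotv (gphi y) (x - y).

Definition boundedv {R : realType} {n : nat} (D : 'rV[R]_n -> Prop) : Prop :=
  exists M : R, forall x, D x -> normv x <= M.

Definition in_domQ {R : realType} {n m : nat} (Q : 'rV[R]_n -> 'rV[R]_m -> \bar R)
  (z : 'rV[R]_n * 'rV[R]_m) : Prop := Q z.1 z.2 \is a fin_num.

Definition properQ {R : realType} {n m : nat} (Q : 'rV[R]_n -> 'rV[R]_m -> \bar R) : Prop :=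
  (forall x y, Q x y != -oo%E) /\ exists x y, Q x y \is a fin_num.

Definition lscQ {R : realType} {n m : nat} (Q : 'rV[R]_n -> 'rV[R]_m -> \bar R) : Prop :=
  forall (z : 'rV[R]_n * 'rV[R]_m) (a : R), (a%:E < Q z.1 z.2)%E ->
    exists delta : R, 0 < delta /\
      forall w, normp (subp w z) < delta -> (a%:E < Q w.1 w.2)%E.

Definition closedp {R : realType} {n m : nat} (A : 'rV[R]_n * 'rV[R]_m -> Prop) : Prop :=
  forall z, (forall eps : R, 0 < eps -> exists w, A w /\ normp (subp w z) < eps) -> A z.

Definition Lfun {R : realType} {n m : nat} (f : 'rV[R]_n -> R) (g : 'rV[R]_m -> R)
  (Q : 'rV[R]_n -> 'rV[R]_m -> \bar R) (x : 'rV[R]_n) (y : 'rV[R]_m) : \bar R :=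
  ((f x + g y)%:E + Q x y)%E.

Definition is_argmin {R : realType} {V : Type} (F : V -> \bar R) (x : V) : Prop :=
  F x \is a fin_num /\ forall x', (F x <= F x')%E.

(* x_{k-1}, with x_{-1} := xm1 *)
Definition prevs {R : realType} {n : nat} (xm1 : 'rV[R]_n) (x : nat -> 'rV[R]_n) (k : nat)
  : 'rV[R]_n := if k is k'.+1 then x k' else xm1.

Definition extrap {R : realType} {n : nat} (a b : R) (xk1 xk xkm1 : 'rV[R]_n) : 'rV[R]_n :=
  xk1 + a *: (xk1 - xk) + b *: (xk - xkm1).

(* Main.v *)
Require Import Defs.
From HB Require Import structures.
From mathcomp Require Import all_boot all_order all_algebra.
From mathcomp Require Import reals constructive_ereal.
From mathcomp Require Import ring lra.
From mathcomp Require Import classical_sets.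
Import Order.TTheory GRing.Theory Num.Theory.
Local Open Scope ring_scope.
Section Vec.
Context {R : realType}.
Context {n : nat}.
Implicit Types u v w : 'rV[R]_n.

Lemma dotvDl u v w : dotv (u + v) w = dotv u w + dotv v w.
Proof. rewrite /dotv -big_split; apply: eq_bigr => i _; by rewrite mxE mulrDl. Qed.
Lemma dotvC u v : dotv u v = dotv v u.
Proof. rewrite /dotv; apply: eq_bigr => i _; by rewrite mulrC. Qed.
Lemma dotvDr u v w : dotv w (u + v) = dotv w u + dotv w v.
Proof. by rewrite dotvC dotvDl !(dotvC w). Qed.
Lemma dotvZl (c : R) u v : dotv (c *: u) v = c * dotv u v.
Proof. rewrite /dotv mulr_sumr; apply: eq_bigr => i _; by rewrite mxE mulrA. Qed.
Lemma dotvZr (c : R) u v : dotv v (c *: u) = c * dotv v u.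
Proof. by rewrite dotvC dotvZl dotvC. Qed.
Lemma dotvNl u v : dotv (- u) v = - dotv u v.
Proof. by rewrite -scaleN1r dotvZl mulN1r. Qed.
Lemma dotvNr u v : dotv v (- u) = - dotv v u.
Proof. by rewrite dotvC dotvNl dotvC. Qed.
Lemma dotvBl u v w : dotv (u - v) w = dotv u w - dotv v w.
Proof. by rewrite dotvDl dotvNl. Qed.
Lemma dotvBr u v w : dotv w (u - v) = dotv w u - dotv w v.
Proof. by rewrite dotvDr dotvNr. Qed.
Lemma dotv0l v : dotv 0 v = 0.
Proof. by rewrite /dotv big1 // => i _; rewrite mxE mul0r. Qed.
Lemma dotv0r v : dotv v 0 = 0.
Proof. by rewrite dotvC dotv0l. Qed.
Lemma dotv_ge0 u : 0 <= dotv u u.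
Proof. rewrite /dotv; apply: sumr_ge0 => i _; rewrite -expr2; exact: sqr_ge0. Qed.
Lemma normv_ge0 u : 0 <= normv u.
Proof. exact: sqrtr_ge0. Qed.
Lemma normv_sq u : normv u ^+ 2 = dotv u u.
Proof. by rewrite /normv sqr_sqrtr // dotv_ge0. Qed.
Lemma normv0 : normv (0 : 'rV[R]_n) = 0.
Proof. by rewrite /normv dotv0l sqrtr0. Qed.

Lemma CS u v : dotv u v ^+ 2 <= dotv u u * dotv v v.
Proof.
set A := dotv u u; set B := dotv v v; set C := dotv u v.
have key : forall p q : R, 0 <= p^+2 * A - 2 * p * q * C + q^+2 * B.
  move=> p q; have := dotv_ge0 (p *: u - q *: v).
  rewrite !dotvBl !dotvBr !dotvZl !dotvZr (dotvC v u) -/A -/B -/C.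
  by move=> H; apply: le_trans H _; rewrite le_eqVlt; apply/orP; left; apply/eqP; ring.
have hA : 0 <= A := dotv_ge0 u. have hB : 0 <= B := dotv_ge0 v.
have k1 := key B C. have k2 := key C A. have k3 := key 1 1. have k4 := key 1 (-1).
have e1 : 0 <= B * (A * B - C ^+ 2) by apply: le_trans k1 _; rewrite le_eqVlt; apply/orP; left; apply/eqP; ring.
have e2 : 0 <= A * (A * B - C ^+ 2) by apply: le_trans k2 _; rewrite le_eqVlt; apply/orP; left; apply/eqP; ring.
rewrite -subr_ge0.
have [hAB|hAB] := lerP 0 (A * B - C ^+ 2); first by [].
have hB0 : B = 0 by nra.
have hA0 : A = 0 by nra.
rewrite hA0 hB0 in k3 k4. nra.
Qed.

Lemma CSn u v : `|dotv u v| <= normv u * normv v.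
Proof.
rewrite /normv -sqrtrM ?dotv_ge0 // -sqrtr_sqr ler_sqrt ?CS //.
by apply: mulr_ge0; apply: dotv_ge0.
Qed.

Lemma normvD u v : normv (u + v) <= normv u + normv v.
Proof.
rewrite /normv -[X in X <= _]ger0_norm ?sqrtr_ge0 // -sqrtr_sqr.
rewrite -[X in _ <= X]ger0_norm ?addr_ge0 ?sqrtr_ge0 // -[X in _ <= X]sqrtr_sqr.
rewrite ler_sqrt ?sqr_ge0 // sqr_sqrtr ?dotv_ge0 //.
rewrite dotvDl !dotvDr (dotvC v u).
have := CSn u v; rewrite /normv => H.
have hA := sqr_sqrtr (dotv_ge0 u). have hB := sqr_sqrtr (dotv_ge0 v).
have h2 := ler_norm (dotv u v).
have a0 := sqrtr_ge0 (dotv u u). have b0 := sqrtr_ge0 (dotv v v).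
move: H hA hB h2 a0 b0.
set a := Num.sqrt (dotv u u); set b := Num.sqrt (dotv v v).
move=> H hA hB h2 a0 b0.
rewrite -hA -hB. nra.
Qed.

Lemma normvZ (c : R) u : normv (c *: u) = `|c| * normv u.
Proof. by rewrite /normv dotvZl dotvZr mulrA -expr2 sqrtrM ?sqr_ge0 // sqrtr_sqr. Qed.
Lemma normvN u : normv (- u) = normv u.
Proof. by rewrite -scaleN1r normvZ normrN normr1 mul1r. Qed.
Lemma normvB u v : normv (u - v) <= normv u + normv v.
Proof. by rewrite -(normvN v); apply: normvD. Qed.
Lemma normv_sym u v : normv (u - v) = normv (v - u).
Proof. by rewrite -normvN opprB. Qed.
Lemma dot_le u v : dotv u v <= normv u * normv v.
Proof. exact: le_trans (ler_norm _) (CSn u v). Qed.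
End Vec.

Section Pair.
Context {R : realType}.
Context {n m : nat}.
Implicit Types (a : 'rV[R]_n) (b : 'rV[R]_m).

Lemma normpE a b : normp (a, b) = Num.sqrt (dotv a a + dotv b b).
Proof. by []. Qed.
Lemma normp_ge0 (z : 'rV[R]_n * 'rV[R]_m) : 0 <= normp z.
Proof. exact: sqrtr_ge0. Qed.
Lemma normp1 a b : normv a <= normp (a, b).
Proof. by rewrite normpE /normv ler_sqrt ?addr_ge0 ?dotv_ge0 // lerDl dotv_ge0. Qed.
Lemma normp2 a b : normv b <= normp (a, b).
Proof. by rewrite normpE /normv ler_sqrt ?addr_ge0 ?dotv_ge0 // lerDr dotv_ge0. Qed.
Lemma normp_le a b : normp (a, b) <= normv a + normv b.
Proof.
rewrite normpE -[X in _ <= X]ger0_norm ?addr_ge0 ?normv_ge0 // -[X in _ <= X]sqrtr_sqr.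
rewrite ler_sqrt ?sqr_ge0 // -(normv_sq a) -(normv_sq b).
have := normv_ge0 a; have := normv_ge0 b. nra.
Qed.
Lemma normp_sub0 (z : 'rV[R]_n * 'rV[R]_m) : normp (subp z z) = 0.
Proof. by rewrite /subp !subrr normpE !dotv0l addr0 sqrtr0. Qed.
End Pair.

Section Generic.
Context {R : realType} {V : Type} (sub : V -> V -> V) (nrm : V -> R) (dt : V -> V -> R).

Lemma frechet_add (F1 F2 : V -> \bar R) (r : V -> R) (x v G w : V) :
  (forall y, F2 y = (F1 y + (r y)%:E)%E) ->
  (forall d, dt w d = dt v d + dt G d) ->
  (forall eps, 0 < eps -> exists delta, 0 < delta /\ forall y, nrm (sub y x) < delta ->
      `|r y - r x - dt G (sub y x)| <= eps * nrm (sub y x)) ->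
  frechet_subdiff sub nrm dt F1 x v -> frechet_subdiff sub nrm dt F2 x w.
Proof.
move=> HF Hw Hr [Hfin H1]; split; first by rewrite HF fin_numD Hfin.
move=> eps e0.
have e2 : 0 < eps / 2 by rewrite divr_gt0.
have [d1 [d1p Hd1]] := H1 _ e2.
have [d2 [d2p Hd2]] := Hr _ e2.
exists (Num.min d1 d2); split; first by rewrite lt_min d1p d2p.
move=> y; rewrite lt_min => /andP [y1 y2].
have := Hd1 y y1; have := Hd2 y y2; rewrite !HF Hw.
move: Hfin; case: (F1 x) => [a| |] // _.
case: (F1 y) => [b| |] //= Hrr; last first.
  by move=> _; rewrite addye // leey.
rewrite -!EFinD !lee_fin => Hb.
move: Hrr; rewrite ler_norml => /andP [Hl _].
set N := nrm (sub y x) in Hl Hb *.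
lra.
Qed.

Lemma frechet_limiting (F : V -> \bar R) x v :
  nrm (sub x x) = 0 -> nrm (sub v v) = 0 ->
  frechet_subdiff sub nrm dt F x v -> limiting_subdiff sub nrm dt F x v.
Proof.
move=> hx hv Hf; exists (fun _ => x), (fun _ => v); split; first by [].
split; first by move=> e e0; exists 0%N => k _; rewrite hx.
split; first by move=> e e0; exists 0%N => k _; rewrite hv.
split; first by case: Hf.
by move=> e e0; exists 0%N => k _; rewrite subrr normr0.
Qed.

Lemma limiting_add (addV : V -> V -> V) (F1 F2 : V -> \bar R) (r : V -> R) (G : V -> V) x v :
  (forall y, F2 y = (F1 y + (r y)%:E)%E) ->
  (forall a b d, dt (addV a b) d = dt a d + dt b d) ->
  (forall a b c d, nrm (sub (addV a b) (addV c d)) <= 2 * (nrm (sub a c) + nrm (sub b d))) ->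
  (forall z eps, 0 < eps -> exists delta, 0 < delta /\ forall y, nrm (sub y z) < delta ->
      `|r y - r z - dt (G z) (sub y z)| <= eps * nrm (sub y z)) ->
  (forall eps, 0 < eps -> exists delta, 0 < delta /\ forall y, nrm (sub y x) < delta ->
      `|r y - r x| < eps) ->
  (forall eps, 0 < eps -> exists delta, 0 < delta /\ forall y, nrm (sub y x) < delta ->
      nrm (sub (G y) (G x)) < eps) ->
  limiting_subdiff sub nrm dt F1 x v -> limiting_subdiff sub nrm dt F2 x (addV v (G x)).
Proof.
move=> HF Hadd Htri Hr Hrc HGc [xs [vs [Hfr [Hx [Hv [Hfin Hval]]]]]].
exists xs, (fun k => addV (vs k) (G (xs k))); split.
  move=> k; apply: frechet_add HF _ (Hr (xs k)) (Hfr k) => d; exact: Hadd.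
split; first exact: Hx.
split.
  move=> eps e0.
  have e2 : 0 < eps / 4 by rewrite divr_gt0.
  have [N1 HN1] := Hv _ e2.
  have [d [d0 Hd]] := HGc _ e2.
  have [N2 HN2] := Hx _ d0.
  exists (maxn N1 N2) => k; rewrite geq_max => /andP [k1 k2].
  apply: le_lt_trans (Htri _ _ _ _) _.
  have := HN1 _ k1; have := Hd _ (HN2 _ k2). lra.
split; first by rewrite HF fin_numD Hfin.
move=> eps e0.
have e2 : 0 < eps / 2 by rewrite divr_gt0.
have [N1 HN1] := Hval _ e2.
have [d [d0 Hd]] := Hrc _ e2.
have [N2 HN2] := Hx _ d0.
exists (maxn N1 N2) => k; rewrite geq_max => /andP [k1 k2].
have := HN1 _ k1; have := Hd _ (HN2 _ k2).
have := (Hfr k).1; rewrite !HF.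
move: Hfin; case: (F1 x) => [a| |] // _.
case: (F1 (xs k)) => [b| |] // _ /=.
move=> h1 h2.
have -> : b + r (xs k) - (a + r x) = (b - a) + (r (xs k) - r x) by ring.
apply: le_lt_trans (ler_normD _ _) _. lra.
Qed.
End Generic.

Section Mono.
Context {R : realType}.

Lemma mono1 (psi : R -> R) :
  (forall t, 0 <= t <= 1 -> forall eps, 0 < eps -> exists delta, 0 < delta /\
    forall s, 0 <= s <= 1 -> `|s - t| < delta ->
      (t <= s -> psi s - psi t <= eps * (s - t)) /\
      (s <= t -> psi t - psi s <= eps * (t - s))) ->
  psi 1 <= psi 0.
Proof.
move=> H; apply/ler_addgt0Pr => eps e0.
pose E := (fun t : R => 0 <= t <= 1 /\ psi t <= psi 0 + eps * t).
have E0 : E 0 by split; [rewrite lexx ler01 | rewrite mulr0 addr0].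
have hs : has_sup E.
  split; first by exists 0.
  by exists 1 => t [/andP [_ ?] _].
set T := sup E.
have T0 : 0 <= T by apply: sup_upper_bound.
have T1 : T <= 1 by apply: ge_sup; [exists 0 | move=> t [/andP [_ ?] _]].
have T01 : 0 <= T <= 1 by rewrite T0 T1.
have [d [d0 Hd]] := H T T01 eps e0.
have [s Es Hs] := sup_adherent d0 hs.
have sT : s <= T by apply: sup_upper_bound.
rewrite -/T in Hs.
have HT : psi T <= psi 0 + eps * T.
  case: Es => s01 Hs2.
  have hst : `|s - T| < d by rewrite distrC ger0_norm ?subr_ge0 //; lra.
  have [_ h2] := Hd s s01 hst. have := h2 sT. lra.
have [T1'|Tlt] := eqVneq T 1.
  by rewrite T1' mulr1 in HT.
have Tl : T < 1 by rewrite lt_neqAle Tlt T1.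
exfalso.
pose s' := Num.min (T + d / 2) 1.
have h1 : T < s' by rewrite lt_min Tl andbT; lra.
have h2 : s' <= 1 by rewrite ge_min lexx orbT.
have h3 : s' <= T + d / 2 by rewrite ge_min lexx.
have s01 : 0 <= s' <= 1 by apply/andP; split => //; lra.
have hst : `|s' - T| < d by rewrite ger0_norm; lra.
have [h4 _] := Hd s' s01 hst.
have := h4 (ltW h1) => h5.
have Es' : E s' by split => //; lra.
have := sup_upper_bound hs Es'. rewrite -/T. lra.
Qed.
End Mono.

Section Descent.
Context {R : realType} {n : nat}.
Implicit Types (a d : 'rV[R]_n).

Lemma shift_eq a d (s t : R) : a + t *: d + (s - t) *: d = a + s *: d.
Proof. by rewrite -addrA -scalerDl (addrC t) subrK. Qed.

Lemma descent (f : 'rV[R]_n -> R) gf (K : R) :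
  is_gradient f gf -> (forall x y, normv (gf x - gf y) <= K * normv (x - y)) -> 0 <= K ->
  forall a d, f (a + d) - f a - dotv (gf a) d <= K / 2 * dotv d d.
Proof.
move=> Hg HL K0 a d.
pose D := dotv d d.
pose psi := fun t : R => f (a + t *: d) - t * dotv (gf a) d - K / 2 * t ^+ 2 * D.
suff : psi 1 <= psi 0.
  rewrite /psi scale1r scale0r addr0 expr1n expr0n /= => h.
  rewrite /D in h; lra.
apply: mono1 => t /andP [t0 t1] eps e0.
have nd0 := normv_ge0 d.
have D0 : 0 <= D := dotv_ge0 d.
have e2 : 0 < eps / 2 / (normv d + 1) by rewrite !divr_gt0 //; lra.
have [d0 [d0p Hd0]] := Hg (a + t *: d) _ e2.
pose del := Num.min (d0 / (normv d + 1)) (eps / (K * D + 1)).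
have KD : 0 <= K * D by apply: mulr_ge0.
have delp : 0 < del by rewrite lt_min !divr_gt0 //; lra.
exists del; split => // s _ hs.
have hs1 : `|s - t| < d0 / (normv d + 1) by apply: lt_le_trans hs _; rewrite ge_min lexx.
have hs2 : `|s - t| <= eps / (K * D + 1) by apply: ltW; apply: lt_le_trans hs _; rewrite ge_min lexx orbT.
have hn : normv ((s - t) *: d) < d0.
  rewrite normvZ. rewrite ltr_pdivlMr in hs1; last lra.
  have := normr_ge0 (s - t). nra.
have := Hd0 _ hn; rewrite shift_eq normvZ dotvZr.
set E1 := f (a + s *: d) - f (a + t *: d) - (s - t) * dotv (gf (a + t *: d)) d.
move=> HE1.
have HE1' : `|E1| <= eps / 2 * `|s - t|.
  apply: le_trans HE1 _.
  have hq : normv d / (normv d + 1) <= 1 by rewrite ler_pdivrMr; lra.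
  have -> : eps / 2 / (normv d + 1) * (`|s - t| * normv d) =
     (eps / 2 * `|s - t|) * (normv d / (normv d + 1)) by ring.
  have : 0 <= eps / 2 * `|s - t| by rewrite mulr_ge0 ?normr_ge0 //; lra.
  nra.
set P := dotv (gf (a + t *: d)) d - dotv (gf a) d - K * t * D.
have HP : P <= 0.
  have := dot_le (gf (a + t *: d) - gf a) d. rewrite dotvBl.
  have := HL (a + t *: d) a. rewrite addrAC subrr add0r normvZ ger0_norm // => h1 h2.
  have := normv_sq d. rewrite -/D => h3.
  have := normv_ge0 (gf (a + t *: d) - gf a) => h4.
  rewrite /P; nra.
have Heq : psi s - psi t = E1 + (s - t) * P - K / 2 * (s - t) ^+ 2 * D.
  by rewrite /psi /E1 /P /=; field.
have hsq : K / 2 * (s - t) ^+ 2 * D <= eps / 2 * `|s - t|.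
  have hn0 := normr_ge0 (s - t).
  rewrite -(real_normK (num_real (s - t))).
  rewrite ler_pdivlMr in hs2; last lra.
  move: hs2 hn0 KD; set u := `|s - t|; move=> hs2 hn0 KD.
  have h1 : u * (K * D * u) <= u * eps by apply: ler_wpM2l => //; nra.
  have -> : K / 2 * u ^+ 2 * D = (u * (K * D * u)) / 2 by field.
  have -> : eps / 2 * u = (u * eps) / 2 by field.
  lra.
move: HE1'; rewrite ler_norml => /andP [HE1a HE1b].
split => hts.
  rewrite ger0_norm ?subr_ge0 // in HE1a HE1b hsq.
  have : (s - t) * P <= 0 by apply: mulr_ge0_le0; rewrite ?subr_ge0.
  have : 0 <= K / 2 * (s - t) ^+ 2 * D.
    apply: mulr_ge0 => //; apply: mulr_ge0; [by apply: divr_ge0 | exact: sqr_ge0].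
  rewrite Heq. lra.
rewrite ler0_norm ?subr_le0 // in HE1a HE1b hsq.
have : (t - s) * P <= 0 by apply: mulr_ge0_le0; rewrite ?subr_ge0.
have : psi t - psi s = - (psi s - psi t) by ring.
rewrite Heq. lra.
Qed.
End Descent.

Section SC.
Context {R : realType} {n : nat}.

Lemma sc_breg (phi : 'rV[R]_n -> R) gphi (th : R) :
  is_gradient phi gphi -> strongly_convex phi th ->
  forall a x, th / 2 * dotv (x - a) (x - a) <= bregman phi gphi x a.
Proof.
move=> Hg Hsc a x.
rewrite /bregman.
set d := x - a.
have -> : x = a + d by rewrite /d addrC subrK.
clearbody d.
set D := dotv d d; set A := dotv a a; set C := dotv a d.
set B := phi (a + d) - phi a - dotv (gphi a) d.
apply/ler_addgt0Pr => eta e0.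
have nd0 := normv_ge0 d.
have D0 : 0 <= D := dotv_ge0 d.
pose eps := eta / 2 / (normv d + 1).
have ep : 0 < eps by rewrite /eps !divr_gt0 //; lra.
have [del [delp Hdel]] := Hg a eps ep.
pose t := Num.min 1 (Num.min (del / 2 / (normv d + 1)) (eta / 2 / (`|th| * D + 1))).
have thD : 0 <= `|th| * D by rewrite mulr_ge0.
have t0 : 0 < t by rewrite /t !lt_min ltr01 !divr_gt0 //; lra.
have t1 : t <= 1 by rewrite /t ge_min lexx.
have t2 : t <= del / 2 / (normv d + 1) by rewrite /t !ge_min lexx orbT.
have t3 : t <= eta / 2 / (`|th| * D + 1) by rewrite /t !ge_min lexx !orbT.
have hn : normv (t *: d) < del.
  rewrite normvZ ger0_norm ?ltW //.
  rewrite ler_pdivlMr in t2; last lra.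
  have : del / 2 < del by lra.
  nra.
have := Hdel (t *: d) hn; rewrite normvZ (ger0_norm (ltW t0)) dotvZr.
rewrite ler_norml => /andP [Hg1 _].
have := Hsc (a + d) a t (ltW t0) t1.
have -> : t *: (a + d) + (1 - t) *: a = a + t *: d.
  by apply/rowP => i; rewrite !mxE; ring.
rewrite !normv_sq.
have -> : dotv (a + t *: d) (a + t *: d) = A + 2 * t * C + t ^+ 2 * D.
  rewrite dotvDl !dotvDr !dotvZl !dotvZr (dotvC d a) -/A -/C -/D. clear -t. move: A C D t. move=> A C D t. ring.
have -> : dotv (a + d) (a + d) = A + 2 * C + D.
  by rewrite dotvDl !dotvDr (dotvC d a) -/A -/C -/D; ring.
rewrite -/A => Hc.
have key : t * (th / 2 * D) <= t * (B + eps * normv d + th / 2 * t * D).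
  rewrite /B. nra.
rewrite ler_pM2l // in key.
have h1 : eps * normv d <= eta / 2.
  rewrite /eps. have : normv d / (normv d + 1) <= 1 by rewrite ler_pdivrMr; lra.
  have -> : eta / 2 / (normv d + 1) * normv d = eta / 2 * (normv d / (normv d + 1)) by ring.
  have : 0 <= eta / 2 by lra. nra.
have h2 : th / 2 * t * D <= eta / 2.
  rewrite ler_pdivlMr in t3; last lra.
  have p0 : 0 <= t * D by rewrite mulr_ge0 // ltW.
  have p1 : th * (t * D) <= `|th| * (t * D) by rewrite ler_wpM2r // ler_norm.
  have p2 : 0 <= `|th| * (t * D) by rewrite mulr_ge0.
  nra.
lra.
Qed.
End SC.

Section GC.
Context {R : realType} {n : nat}.
Lemma grad_cont {F : 'rV[R]_n -> R} {G} : is_gradient F G ->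
  forall x eps, 0 < eps -> exists delta, 0 < delta /\ forall y, normv (y - x) < delta -> `|F y - F x| < eps.
Proof.
move=> Hg x eps e0.
have [d1 [d1p Hd1]] := Hg x 1 ltr01.
have K0 := normv_ge0 (G x).
exists (Num.min d1 (eps / (normv (G x) + 1))); split.
  by rewrite lt_min d1p divr_gt0 //; lra.
move=> y; rewrite lt_min => /andP [y1 y2].
have := Hd1 _ y1; rewrite [x + _]addrC subrK mul1r => h.
have := CSn (G x) (y - x) => hc.
rewrite ltr_pdivlMr in y2; last lra.
have hn := normv_ge0 (y - x).
have : `|F y - F x| <= `|F y - F x - dotv (G x) (y - x)| + `|dotv (G x) (y - x)|.
  by rewrite -[X in `|X| <= _](subrK (dotv (G x) (y - x))) ler_normD.
nra.
Qed.
End GC.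

Section PairInst.
Context {R : realType} {n m : nat}.
Lemma subdiff_addfg (f : 'rV[R]_n -> R) gf (g : 'rV[R]_m -> R) gg :
  is_gradient f gf -> continuous_v gf -> is_gradient g gg -> continuous_v gg ->
  forall (F1 F2 : 'rV[R]_n * 'rV[R]_m -> \bar R),
  (forall z, F2 z = (F1 z + (f z.1 + g z.2)%:E)%E) ->
  forall x v, subdiffp F1 x v -> subdiffp F2 x (v.1 + gf x.1, v.2 + gg x.2).
Proof.
move=> Hgf Hgfc Hgg Hggc F1 F2 HF x v Hs.
apply: (@limiting_add R _ subp normp dotp (fun a b => (a.1 + b.1, a.2 + b.2)) F1 F2
   (fun z => f z.1 + g z.2) (fun z => (gf z.1, gg z.2)) x v HF _ _ _ _ _ Hs).
- by move=> a b d; rewrite /dotp /= !dotvDl; ring.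
- move=> a b c d; rewrite /subp /=.
  have e1 : a.1 + b.1 - (c.1 + d.1) = (a.1 - c.1) + (b.1 - d.1) by rewrite opprD addrACA.
  have e2 : a.2 + b.2 - (c.2 + d.2) = (a.2 - c.2) + (b.2 - d.2) by rewrite opprD addrACA.
  rewrite e1 e2; apply: le_trans (normp_le _ _) _.
  have := normvD (a.1 - c.1) (b.1 - d.1); have := normvD (a.2 - c.2) (b.2 - d.2).
  have := normp1 (a.1 - c.1) (a.2 - c.2); have := normp2 (a.1 - c.1) (a.2 - c.2).
  have := normp1 (b.1 - d.1) (b.2 - d.2); have := normp2 (b.1 - d.1) (b.2 - d.2).
  lra.
- move=> z eps e0.
  have e2 : 0 < eps / 2 by rewrite divr_gt0.
  have [d1 [d1p Hd1]] := Hgf z.1 _ e2.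
  have [d2 [d2p Hd2]] := Hgg z.2 _ e2.
  exists (Num.min d1 d2); split; first by rewrite lt_min d1p d2p.
  move=> y; rewrite lt_min => /andP [y1 y2].
  rewrite /subp /dotp /=.
  have n1 := normp1 (y.1 - z.1) (y.2 - z.2); have n2 := normp2 (y.1 - z.1) (y.2 - z.2).
  move: y1 y2; rewrite /subp /= => y1 y2.
  have := Hd1 (y.1 - z.1) (le_lt_trans n1 y1); rewrite [z.1 + _]addrC subrK => h1.
  have := Hd2 (y.2 - z.2) (le_lt_trans n2 y2); rewrite [z.2 + _]addrC subrK => h2.
  set N := normp _ in n1 n2 *.
  have -> : f y.1 + g y.2 - (f z.1 + g z.2) - (dotv (gf z.1) (y.1 - z.1) + dotv (gg z.2) (y.2 - z.2))
     = (f y.1 - f z.1 - dotv (gf z.1) (y.1 - z.1)) + (g y.2 - g z.2 - dotv (gg z.2) (y.2 - z.2)) by ring.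
  apply: le_trans (ler_normD _ _) _.
  have : eps / 2 * normv (y.1 - z.1) <= eps / 2 * N by rewrite ler_wpM2l // ltW.
  have : eps / 2 * normv (y.2 - z.2) <= eps / 2 * N by rewrite ler_wpM2l // ltW.
  lra.
- move=> eps e0.
  have e2 : 0 < eps / 2 by rewrite divr_gt0.
  have [d1 [d1p Hd1]] := grad_cont Hgf x.1 _ e2.
  have [d2 [d2p Hd2]] := grad_cont Hgg x.2 _ e2.
  exists (Num.min d1 d2); split; first by rewrite lt_min d1p d2p.
  move=> y; rewrite lt_min => /andP [y1 y2].
  have := Hd1 y.1 (le_lt_trans (normp1 _ _) y1).
  have := Hd2 y.2 (le_lt_trans (normp2 _ _) y2).
  have -> : f y.1 + g y.2 - (f x.1 + g x.2) = (f y.1 - f x.1) + (g y.2 - g x.2) by ring.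
  have := ler_normD (f y.1 - f x.1) (g y.2 - g x.2).
  lra.
- move=> eps e0.
  have e2 : 0 < eps / 2 by rewrite divr_gt0.
  have [d1 [d1p Hd1]] := Hgfc x.1 _ e2.
  have [d2 [d2p Hd2]] := Hggc x.2 _ e2.
  exists (Num.min d1 d2); split; first by rewrite lt_min d1p d2p.
  move=> y; rewrite lt_min => /andP [y1 y2].
  have := Hd1 y.1 (le_lt_trans (normp1 _ _) y1).
  have := Hd2 y.2 (le_lt_trans (normp2 _ _) y2).
  have := normp_le (gf y.1 - gf x.1) (gg y.2 - gg x.2).
  rewrite /subp /=. lra.
Qed.
End PairInst.

Section Helpers.
Context {R : realType}.

Lemma eadd_cancel (a : \bar R) (c : R) : ((a + c%:E) + (- c)%:E)%E = a.
Proof. by case: a => [r| |] //=; rewrite -!EFinD addrK. Qed.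

Lemma eadd_shift (h : \bar R) (p q : R) : ((q%:E + h) = (p%:E + h) + (q - p)%:E)%E.
Proof. by case: h => [r| |] //=; rewrite -!EFinD; congr (_%:E); ring. Qed.

Lemma argmin_frechet {V : Type} (sub : V -> V -> V) (nrm : V -> R) (dt : V -> V -> R)
  (F : V -> \bar R) x z :
  (forall d, dt z d = 0) -> (forall y, 0 <= nrm (sub y x)) ->
  is_argmin F x -> frechet_subdiff sub nrm dt F x z.
Proof.
move=> Hz Hn [Hfin Hmin]; split => // eps e0; exists 1; split => // y _.
apply: le_trans (Hmin y); rewrite Hz sub0r.
move: Hfin; case: (F x) => [a| |] // _.
rewrite -EFinD lee_fin gerDl oppr_le0; apply: mulr_ge0 => //; exact: ltW.
Qed.

Context {n : nat}.
Implicit Types F : 'rV[R]_n -> R.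

Lemma grad_sub F1 G1 F2 G2 : is_gradient F1 G1 -> is_gradient F2 G2 ->
  is_gradient (fun x => F1 x - F2 x) (fun x => G1 x - G2 x).
Proof.
move=> H1 H2 x eps e0.
have e2 : 0 < eps / 2 by rewrite divr_gt0.
have [d1 [d1p Hd1]] := H1 x _ e2.
have [d2 [d2p Hd2]] := H2 x _ e2.
exists (Num.min d1 d2); split; first by rewrite lt_min d1p d2p.
move=> h; rewrite lt_min => /andP [h1 h2].
have := Hd1 h h1; have := Hd2 h h2.
rewrite dotvBl.
have -> : F1 (x + h) - F2 (x + h) - (F1 x - F2 x) - (dotv (G1 x) h - dotv (G2 x) h) =
  (F1 (x + h) - F1 x - dotv (G1 x) h) - (F2 (x + h) - F2 x - dotv (G2 x) h) by ring.
move=> a b; apply: le_trans (ler_normB _ _) _. lra.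
Qed.

Lemma grad_s (phi : 'rV[R]_n -> R) gphi (c a : 'rV[R]_n) : is_gradient phi gphi ->
  is_gradient (fun x => - (dotv c x + bregman phi gphi x a)) (fun x => - (c + gphi x - gphi a)).
Proof.
move=> H x eps e0.
have [d [dp Hd]] := H x eps e0.
exists d; split => // h hd.
have HA := Hd h hd. rewrite /=.
match goal with |- is_true (`|?B| <= _) => have -> : B = - (phi (x + h) - phi x - dotv (gphi x) h) end.
  rewrite /bregman ?dotvDl ?dotvNl ?dotvDl ?dotvNl ?dotvDr ?dotvNr ?dotvDr ?dotvNr; ring.
by rewrite normrN.
Qed.

Lemma grad_yform F G X : is_gradient F G ->
  forall eps, 0 < eps -> exists delta, 0 < delta /\ forall y, normv (y - X) < delta ->
    `|F y - F X - dotv (G X) (y - X)| <= eps * normv (y - X).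
Proof.
move=> H eps e0; have [d [dp Hd]] := H X eps e0; exists d; split => // y hy.
by have := Hd _ hy; rewrite [X + _]addrC subrK.
Qed.
End Helpers.

Section FB.
Context {R : realType} {n : nat}.
Lemma fbound (f : 'rV[R]_n -> R) gf Lf phi gphi th :
  is_gradient f gf -> lipschitz_v gf Lf -> is_gradient phi gphi -> strongly_convex phi th ->
  Lf < th -> forall a X, f X - f a - dotv (gf a) (X - a) <= bregman phi gphi X a.
Proof.
move=> Hg HL Hp Hs Hth a X.
have sc := @sc_breg _ _ phi gphi th Hp Hs a X.
have D0 := dotv_ge0 (X - a).
case: (lerP 0 Lf) => hL.
  have := @descent _ _ f gf Lf Hg HL hL a (X - a); rewrite [a + _]addrC subrK.
  move: sc D0; set D := dotv (X - a) (X - a) => sc D0 h.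
  have : Lf / 2 * D <= th / 2 * D by rewrite ler_wpM2r // ler_pM2r //; lra.
  lra.
have hn : normv (X - a) = 0.
  have := HL X a; have := normv_ge0 (gf X - gf a); have := normv_ge0 (X - a).
  move=> h1 h2 h3; apply/eqP; rewrite eq_le h1 andbT; nra.
have hD : dotv (X - a) (X - a) = 0 by rewrite -normv_sq hn expr0n.
have HL0 : forall x y, normv (gf x - gf y) <= 0 * normv (x - y).
  move=> x y; rewrite mul0r; apply: le_trans (HL x y) _.
  have := normv_ge0 (x - y); nra.
have := @descent _ _ f gf 0 Hg HL0 (lexx 0) a (X - a); rewrite [a + _]addrC subrK hD mulr0.
move: sc; rewrite hD mulr0. lra.
Qed.
End FB.

Lemma step_lemma (P : bool) (A B : Prop) : (P -> A) -> (~~ P -> B) -> (P /\ A) \/ B.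
Proof. by case: P => H1 H2; [left; split => //; apply: H1 | right; apply: H2]. Qed.
Theorem lemma3p2 (R : realType) (n m : nat)
  (f : 'rV[R]_n -> R) (gf : 'rV[R]_n -> 'rV[R]_n)
  (g : 'rV[R]_m -> R) (gg : 'rV[R]_m -> 'rV[R]_m)
  (Q : 'rV[R]_n -> 'rV[R]_m -> \bar R)
  (q : 'rV[R]_n -> 'rV[R]_m -> R) (gq : 'rV[R]_n -> 'rV[R]_m -> 'rV[R]_n)
  (h : 'rV[R]_n -> \bar R)
  (phi1 : 'rV[R]_n -> R) (gphi1 : 'rV[R]_n -> 'rV[R]_n)
  (phi2 : 'rV[R]_m -> R) (gphi2 : 'rV[R]_m -> 'rV[R]_m)
  (Lf Lg theta1 theta2 eta1 eta2 : R)
  (* (A1) *)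
  (HLbd : exists c : R, forall x y, (c%:E <= Lfun f g Q x y)%E)
  (Hgf : is_gradient f gf) (Hgfc : continuous_v gf) (HgfL : lipschitz_v gf Lf)
  (Hgg : is_gradient g gg) (Hggc : continuous_v gg) (HggL : lipschitz_v gg Lg)
  (HQprop : properQ Q) (HQlsc : lscQ Q)
  (Hphi1 : is_gradient phi1 gphi1) (Hsc1 : strongly_convex phi1 theta1)
  (Hth1 : Lf < theta1) (Hphi1L : lipschitz_v gphi1 eta1)
  (Hphi2 : is_gradient phi2 gphi2) (Hsc2 : strongly_convex phi2 theta2)
  (Hth2 : Lg < theta2) (Hphi2L : lipschitz_v gphi2 eta2)
  (* (A2) *)
  (Hcoer : forall M : R, exists r : R, forall x y,
      r < normp (x, y) -> (M%:E < Lfun f g Q x y)%E)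
  (HdomQ : closedp (in_domQ Q))
  (Hpart : forall x y, in_domQ Q (x, y) -> forall vx vy,
      subdiffv (fun x' => Q x' y) x vx -> subdiffv (fun y' => Q x y') y vy ->
      subdiffp (fun z => Q z.1 z.2) (x, y) (vx, vy))
  (HQqh : forall x y, Q x y = ((q x y)%:E + h x)%E)
  (Hh : forall x, h x \is a fin_num -> forall eps : R, 0 < eps ->
      exists delta : R, 0 < delta /\ forall x', h x' \is a fin_num ->
        normv (x' - x) < delta -> `|fine (h x') - fine (h x)| < eps)
  (Hq : forall z, in_domQ Q z -> forall eps : R, 0 < eps ->
      exists delta : R, 0 < delta /\ forall w, in_domQ Q w ->
        normp (subp w z) < delta -> `|q w.1 w.2 - q z.1 z.2| < eps)
  (Hgq : forall y, is_gradient (fun x => q x y) (fun x => gq x y))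
  (Hgqc : forall y, continuous_v (fun x => gq x y))
  (Hxi : forall (D1 : 'rV[R]_n -> Prop) (D2 : 'rV[R]_m -> Prop),
      boundedv D1 -> boundedv D2 ->
      (forall x y, D1 x -> D2 y -> in_domQ Q (x, y)) ->
      exists xi : R, 0 < xi /\ forall xb y yb, D1 xb -> D2 y -> D2 yb ->
        normv (gq xb y - gq xb yb) <= xi * normv (y - yb))
  (* the algorithm *)
  (x xh : nat -> 'rV[R]_n) (y yh : nat -> 'rV[R]_m)
  (xm1 : 'rV[R]_n) (ym1 : 'rV[R]_m)
  (alpha beta : nat -> R) (amax bmax : R)
  (Hinit : xh 0%N = x 0%N /\ yh 0%N = y 0%N)
  (Hamax : 0 <= amax) (Hbmax : 0 <= bmax) (Hab : amax + bmax < 1)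
  (Halpha : forall k, 0 <= alpha k <= amax)
  (Hbeta : forall k, 0 <= beta k <= bmax)
  (Hstepx : forall k, is_argmin (fun x' => (Q x' (yh k) +
      (dotv (gf (xh k)) x' + bregman phi1 gphi1 x' (xh k))%:E)%E) (x k.+1))
  (Hstepy : forall k, is_argmin (fun y' => (Q (x k.+1) y' +
      (dotv (gg (yh k)) y' + bregman phi2 gphi2 y' (yh k))%:E)%E) (y k.+1))
  (Hstep3 : forall k,
      let u := extrap (alpha k) (beta k) (x k.+1) (x k) (prevs xm1 x k) in
      let v := extrap (alpha k) (beta k) (y k.+1) (y k) (prevs ym1 y k) in
      ((Lfun f g Q u v <= Lfun f g Q (x k.+1) (y k.+1))%E ->
          xh k.+1 = u /\ yh k.+1 = v) /\
      (~~ (Lfun f g Q u v <= Lfun f g Q (x k.+1) (y k.+1))%E ->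
          xh k.+1 = x k.+1 /\ yh k.+1 = y k.+1)) :
  let px := fun k => gq (x k.+1) (y k.+1) - gq (x k.+1) (yh k) +
      (gf (x k.+1) - gf (xh k) - gphi1 (x k.+1) + gphi1 (xh k)) in
  let py := fun k => gg (y k.+1) - gg (yh k) - gphi2 (y k.+1) + gphi2 (yh k) in
  (forall k, (1 <= k)%N ->
     subdiffp (fun z => Lfun f g Q z.1 z.2) (x k.+1, y k.+1) (px k, py k)) /\
  exists rho : R, 0 < rho /\ forall k, (1 <= k)%N ->
     normp (px k, py k) <= rho * normp (x k.+1 - xh k, y k.+1 - yh k).
Proof.
move=> px py.
have Fx : forall k, Q (x k.+1) (yh k) \is a fin_num.
  by move=> k; have [+ _] := Hstepx k; rewrite fin_numD => /andP [].
have Fy : forall k, Q (x k.+1) (y k.+1) \is a fin_num.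
  by move=> k; have [+ _] := Hstepy k; rewrite fin_numD => /andP [].
have part1 : forall k, subdiffp (fun z => Lfun f g Q z.1 z.2) (x k.+1, y k.+1) (px k, py k).
  move=> k.
  have HX : frechet_subdiff (fun u v => u - v) normv dotv (fun x' => Q x' (y k.+1)) (x k.+1)
      (px k - gf (x k.+1)).
    have H0 := @argmin_frechet _ _ (fun u v => u - v) normv dotv _ _ 0
       (fun d => dotv0l d) (fun y => normv_ge0 _) (Hstepx k).
    have H1 := @frechet_add _ _ (fun u v => u - v) normv dotv _ (fun x' => Q x' (yh k))
       (fun x' => - (dotv (gf (xh k)) x' + bregman phi1 gphi1 x' (xh k))) (x k.+1) 0
       (- (gf (xh k) + gphi1 (x k.+1) - gphi1 (xh k)))
       (- (gf (xh k) + gphi1 (x k.+1) - gphi1 (xh k)))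
       (fun y => esym (eadd_cancel _ _)) (fun d => esym (eq_trans (congr1 (fun t => t + _) (dotv0l d)) (add0r _)))
       (@grad_yform _ _ _ _ (x k.+1) (@grad_s _ _ phi1 gphi1 (gf (xh k)) (xh k) Hphi1)) H0.
    apply: (@frechet_add _ _ (fun u v => u - v) normv dotv _ _
       (fun x' => q x' (y k.+1) - q x' (yh k)) (x k.+1) _
       (gq (x k.+1) (y k.+1) - gq (x k.+1) (yh k)) _ _ _ _ H1).
    - by move=> y'; rewrite !HQqh; apply: eadd_shift.
    - move=> d; rewrite -dotvDl; congr (dotv _ d).
      by apply/rowP => i; rewrite /px !mxE; ring.
    - exact: (@grad_yform _ _ _ _ (x k.+1) (@grad_sub _ _ _ _ _ _ (Hgq (y k.+1)) (Hgq (yh k)))).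
  have HY : frechet_subdiff (fun u v => u - v) normv dotv (fun y' => Q (x k.+1) y') (y k.+1)
      (py k - gg (y k.+1)).
    have H0 := @argmin_frechet _ _ (fun u v => u - v) normv dotv _ _ 0
       (fun d => dotv0l d) (fun y => normv_ge0 _) (Hstepy k).
    apply: (@frechet_add _ _ (fun u v => u - v) normv dotv _ _
       (fun y' => - (dotv (gg (yh k)) y' + bregman phi2 gphi2 y' (yh k))) (y k.+1) 0
       (- (gg (yh k) + gphi2 (y k.+1) - gphi2 (yh k))) _ _ _ _ H0).
    - by move=> y'; rewrite eadd_cancel.
    - move=> d; rewrite dotv0l add0r; congr (dotv _ d).
      by apply/rowP => i; rewrite /py !mxE; ring.
    - exact: (@grad_yform _ _ _ _ (y k.+1) (@grad_s _ _ phi2 gphi2 (gg (yh k)) (yh k) Hphi2)).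
  have n0 : forall (p : nat) (u : 'rV[R]_p), normv (u - u) = 0 by move=> p u; rewrite subrr normv0.
  have LX := @frechet_limiting _ _ _ _ _ _ _ _ (n0 _ (x k.+1)) (n0 _ _) HX.
  have LY := @frechet_limiting _ _ _ _ _ _ _ _ (n0 _ (y k.+1)) (n0 _ _) HY.
  have HP := Hpart (x k.+1) (y k.+1) (Fy k) _ _ LX LY.
  have := @subdiff_addfg _ _ _ f gf g gg Hgf Hgfc Hgg Hggc (fun z => Q z.1 z.2)
    (fun z => Lfun f g Q z.1 z.2) (fun z => addeC _ _) _ _ HP.
  by rewrite /= !subrK.
split; first by move=> k _; exact: part1.
have Hdesc : forall k, (Lfun f g Q (x k.+1) (y k.+1) <= Lfun f g Q (xh k) (yh k))%E.
  move=> k.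
  have [_ Hx] := Hstepx k; have Hx1 := Hx (xh k).
  have [_ Hy] := Hstepy k; have Hy1 := Hy (yh k).
  have fb1 := @fbound _ _ f gf Lf phi1 gphi1 theta1 Hgf HgfL Hphi1 Hsc1 Hth1 (xh k) (x k.+1).
  have fb2 := @fbound _ _ g gg Lg phi2 gphi2 theta2 Hgg HggL Hphi2 Hsc2 Hth2 (yh k) (y k.+1).
  have b0 : forall (p : nat) (ph : 'rV[R]_p -> R) gph u, bregman ph gph u u = 0.
    by move=> p ph gph u; rewrite /bregman !subrr dotv0r subrr.
  rewrite !b0 !addr0 in Hx1 Hy1.
  rewrite !dotvBr in fb1 fb2.
  rewrite /Lfun.
  have hab := HQprop.1 (xh k) (yh k).
  move: Hx1; case E: (Q (xh k) (yh k)) hab => [qab| |] // _; last first.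
    by move=> _; rewrite addey ?leey.
  move: Hy1.
  rewrite -(fineK (Fx k)) -(fineK (Fy k)) -!EFinD !lee_fin => h1 h2.
  lra.
have Hst : forall k, (Lfun f g Q (xh k.+1) (yh k.+1) <= Lfun f g Q (x k.+1) (y k.+1))%E.
  move=> k; have H := Hstep3 k; cbv zeta in H; case: H => H1 H2.
  by case: (@step_lemma _ _ _ H1 H2) => [[hle [-> ->]] | [-> ->]].
have L1fin : Lfun f g Q (x 1%N) (y 1%N) \is a fin_num by rewrite /Lfun fin_numD Fy.
have HM : forall k, (Lfun f g Q (x k.+1) (y k.+1) <= Lfun f g Q (x 1%N) (y 1%N))%E.
  elim=> [|k IH]; first exact: lexx.
  exact: le_trans (Hdesc k.+1) (le_trans (Hst k) IH).
have HMh : forall k, (1 <= k)%N -> (Lfun f g Q (xh k) (yh k) <= Lfun f g Q (x 1%N) (y 1%N))%E.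
  by case=> // k _; exact: le_trans (Hst k) (HM k).
have [r Hr] := Hcoer (fine (Lfun f g Q (x 1%N) (y 1%N))).
have Hbd : forall u v, (Lfun f g Q u v <= Lfun f g Q (x 1%N) (y 1%N))%E -> normp (u, v) <= r.
  move=> u v huv; rewrite leNgt; apply/negP => hr.
  have := Hr u v hr; rewrite fineK // => hh.
  by have := lt_le_trans hh huv; rewrite ltxx.
pose D1 := fun u : 'rV[R]_n => h u \is a fin_num /\ normv u <= r.
pose D2 := fun v : 'rV[R]_m => normv v <= r.
have hdom : forall u v, D1 u -> D2 v -> in_domQ Q (u, v).
  by move=> u v [hu _] _; rewrite /in_domQ /= HQqh fin_numD hu.
have bD1 : boundedv D1 by exists r => u [].
have bD2 : boundedv D2 by exists r.
have [xi [xi0 Hxi']] := Hxi D1 D2 bD1 bD2 hdom.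
exists (xi + `|Lf| + `|eta1| + `|Lg| + `|eta2| + 1); split.
  have := normr_ge0 Lf; have := normr_ge0 Lg; have := normr_ge0 eta1; have := normr_ge0 eta2.
  lra.
move=> k k1.
have hX : D1 (x k.+1).
  split; first by have := Fx k; rewrite HQqh fin_numD => /andP [].
  exact: le_trans (normp1 _ _) (Hbd _ _ (HM k)).
have hY : D2 (y k.+1) by exact: le_trans (normp2 _ _) (Hbd _ _ (HM k)).
have hb : D2 (yh k) by exact: le_trans (normp2 _ _) (Hbd _ _ (HMh k k1)).
have g1 := Hxi' _ _ _ hX hY hb.
have l1 := HgfL (x k.+1) (xh k); have l2 := Hphi1L (x k.+1) (xh k).
have l3 := HggL (y k.+1) (yh k); have l4 := Hphi2L (y k.+1) (yh k).
have epx : px k = (gq (x k.+1) (y k.+1) - gq (x k.+1) (yh k)) +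
   ((gf (x k.+1) - gf (xh k)) - (gphi1 (x k.+1) - gphi1 (xh k))).
  by apply/rowP => i; rewrite /px !mxE; ring.
have epy : py k = (gg (y k.+1) - gg (yh k)) - (gphi2 (y k.+1) - gphi2 (yh k)).
  by apply/rowP => i; rewrite /py !mxE; ring.
rewrite epx epy.
apply: le_trans (normp_le _ _) _.
have n1 := normvD (gq (x k.+1) (y k.+1) - gq (x k.+1) (yh k))
   ((gf (x k.+1) - gf (xh k)) - (gphi1 (x k.+1) - gphi1 (xh k))).
have n2 := normvB (gf (x k.+1) - gf (xh k)) (gphi1 (x k.+1) - gphi1 (xh k)).
have n3 := normvB (gg (y k.+1) - gg (yh k)) (gphi2 (y k.+1) - gphi2 (yh k)).
have p1 := normp1 (x k.+1 - xh k) (y k.+1 - yh k).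
have p2 := normp2 (x k.+1 - xh k) (y k.+1 - yh k).
have N0 := normp_ge0 (x k.+1 - xh k, y k.+1 - yh k).
move: p1 p2 N0; set N := normp _ => p1 p2 N0.
have hle : forall (c : R) (t : R), 0 <= t -> t <= N -> c * t <= `|c| * N.
  move=> c t t0 tN; have := ler_norm c; have := normr_ge0 c; nra.
have q1 := hle Lf _ (normv_ge0 _) p1; have q2 := hle eta1 _ (normv_ge0 _) p1.
have q3 := hle Lg _ (normv_ge0 _) p2; have q4 := hle eta2 _ (normv_ge0 _) p2.
have q5 : xi * normv (y k.+1 - yh k) <= xi * N by nra.
have -> : (xi + `|Lf| + `|eta1| + `|Lg| + `|eta2| + 1) * N =
   xi * N + `|Lf| * N + `|eta1| * N + `|Lg| * N + `|eta2| * N + N by ring.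
lra.
Qed.
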